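(* For a tree $T$, $\lfloor \mathrm{sp}\rfloor(T)=|V(T)|-\mathrm{diam}(T)-1$.
   Context: All graphs are finite, have at least one vertex, have no loops, and may have multiple (parallel) edges. $\mathrm{diam}$ denotes the diameter (maximum distance between two vertices, distance measured in number of edges). A unique shortest path is a shortest $u$–$v$ path $P$ such that every $u$–$v$ path with the same number of vertices is identical to $P$, where two paths with different edge sequences are different even if their vertex sequences agree; a single vertex is a unique shortest path. The parade number $\mathrm{usp}(G)$ is the largest number of vertices of a unique shortest path in $G$. The spectator number is $\mathrm{sp}(G)=|V(G)|-\mathrm{usp}(G)$. A minor of $H$ is any graph obtained from $H$ by a sequence of: deleting an isolated vertex, deleting an edge, contracting an edge that has no edge parallel to it. The spectator floor $\lfloor \mathrm{sp}\rfloor(G)$ is the minimum of $\mathrm{sp}(H)$ over all graphs $H$ of which $G$ is a minor. *)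

(* Defs.v *)
(* Finite multigraphs with vertices 0..nv-1 and an
   edge list (parallel edges = distinct list entries, indexed by position). *)
From mathcomp Require Import all_boot.
Set Implicit Arguments. Unset Strict Implicit. Unset Printing Implicit Defensive.

Record mgraph := MGraph { nv : nat; edges : seq (nat * nat) }.

Definition wf (G : mgraph) : bool :=
  (0 < nv G) &&
  all (fun e : nat * nat => [&& e.1 < nv G, e.2 < nv G & e.1 != e.2]) (edges G).

Definition joins (G : mgraph) (i u v : nat) : bool :=
  (i < size (edges G)) &&
  (let e := nth (0, 0) (edges G) i in
   ((e.1 == u) && (e.2 == v)) || ((e.1 == v) && (e.2 == u))).

Definition is_path (G : mgraph) (vs es : seq nat) : Prop :=
  [/\ vs != [::], uniq vs, all (fun w => w < nv G) vs,
      size es = (size vs).-1 &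
      forall k, k < size es -> joins G (nth 0 es k) (nth 0 vs k) (nth 0 vs k.+1)].

Definition path_from_to (G : mgraph) (u v : nat) (vs es : seq nat) : Prop :=
  is_path G vs es /\ head 0 vs = u /\ last 0 vs = v.

Definition is_usp (G : mgraph) (vs es : seq nat) : Prop :=
  let u := head 0 vs in let v := last 0 vs in
  [/\ path_from_to G u v vs es,
      (forall vs' es', path_from_to G u v vs' es' -> size vs <= size vs') &
      (forall vs' es', path_from_to G u v vs' es' -> size vs' = size vs ->
                       vs' = vs /\ es' = es)].

Definition usp_is (G : mgraph) (k : nat) : Prop :=
  (exists vs es, is_usp G vs es /\ size vs = k) /\
  (forall vs es, is_usp G vs es -> size vs <= k).

Definition sp_is (G : mgraph) (s : nat) : Prop :=
  exists k, usp_is G k /\ s = nv G - k.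

Definition shift (x w : nat) : nat := if x < w then w.-1 else w.

Definition isolated (G : mgraph) (x : nat) : bool :=
  (x < nv G) && all (fun e : nat * nat => (e.1 != x) && (e.2 != x)) (edges G).

Definition del_vertex (G : mgraph) (x : nat) : mgraph :=
  MGraph (nv G).-1 (map (fun e : nat * nat => (shift x e.1, shift x e.2)) (edges G)).

Definition del_edge (G : mgraph) (i : nat) : mgraph :=
  MGraph (nv G) (take i (edges G) ++ drop i.+1 (edges G)).

Definition no_parallel (G : mgraph) (i : nat) : Prop :=
  i < size (edges G) /\
  forall j, j != i -> ~~ joins G j (nth (0, 0) (edges G) i).1 (nth (0, 0) (edges G) i).2.

Definition contract (G : mgraph) (i : nat) : mgraph :=
  let a := (nth (0, 0) (edges G) i).1 in
  let b := (nth (0, 0) (edges G) i).2 in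
  let ren w := shift b (if w == b then a else w) in
  MGraph (nv G).-1
    (map (fun e : nat * nat => (ren e.1, ren e.2))
         (take i (edges G) ++ drop i.+1 (edges G))).

Definition normp (p : nat * nat) : nat * nat := (minn p.1 p.2, maxn p.1 p.2).

Definition iso (G H : mgraph) : Prop :=
  nv G = nv H /\
  exists f : nat -> nat,
    [/\ forall w, w < nv G -> f w < nv H,
        forall w w', w < nv G -> w' < nv G -> f w = f w' -> w = w' &
        perm_eq (map (fun e : nat * nat => normp (f e.1, f e.2)) (edges G))
                (map normp (edges H))].

Inductive minor_step : mgraph -> mgraph -> Prop :=
  | ms_del_vertex G x : isolated G x -> minor_step G (del_vertex G x)
  | ms_del_edge G i : i < size (edges G) -> minor_step G (del_edge G i)
  | ms_contract G i : no_parallel G i -> minor_step G (contract G i)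
  | ms_iso G G' : iso G G' -> minor_step G G'.

(* obtainable H G : G is obtained from H by a sequence of operations,
   all intermediate graphs being graphs (wf) *)
Inductive obtainable (H : mgraph) : mgraph -> Prop :=
  | ob_refl : wf H -> obtainable H H
  | ob_step G1 G2 : obtainable H G1 -> minor_step G1 G2 -> wf G2 -> obtainable H G2.

Definition minor (G H : mgraph) : Prop := obtainable H G.

Definition sp_floor_is (G : mgraph) (s : nat) : Prop :=
  (exists H, wf H /\ minor G H /\ sp_is H s) /\
  (forall H s', wf H -> minor G H -> sp_is H s' -> s <= s').

Definition dist_is (G : mgraph) (u v d : nat) : Prop :=
  (exists vs es, path_from_to G u v vs es /\ size es = d) /\
  (forall vs es, path_from_to G u v vs es -> d <= size es).

Definition diam_is (G : mgraph) (D : nat) : Prop :=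
  (exists u v, [/\ u < nv G, v < nv G & dist_is G u v D]) /\
  (forall u v d, u < nv G -> v < nv G -> dist_is G u v d -> d <= D).

Definition connected (G : mgraph) : Prop :=
  forall u v, u < nv G -> v < nv G -> exists vs es, path_from_to G u v vs es.

(* a cycle: a path with >= 2 vertices closed by a further edge not on it
   (a pair of parallel edges is a cycle of length 2) *)
Definition has_cycle (G : mgraph) : Prop :=
  exists vs es e, [/\ is_path G vs es, 1 < size vs, e \notin es &
                      joins G e (last 0 vs) (head 0 vs)].

Definition is_tree (G : mgraph) : Prop := [/\ wf G, connected G & ~ has_cycle G].

(* Main.v *)
Require Import Defs.
From mathcomp Require Import all_boot zify.
From Stdlib Require Import ClassicalEpsilon Classical.
Set Implicit Arguments. Unset Strict Implicit. Unset Printing Implicit Defensive.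

Lemma joins_sym G i a b : joins G i a b = joins G i b a.
Proof. by rewrite /joins /= orbC. Qed.

Definition adjP (G : mgraph) (P : pred nat) (a b : nat) : bool :=
  has (fun j => P j && joins G j a b) (iota 0 (size (edges G))).
Definition adj G := adjP G xpredT.

Lemma adjPP G (P : pred nat) a b : reflect (exists2 j, P j & joins G j a b) (adjP G P a b).
Proof.
apply: (iffP hasP) => [[j _ /andP[Pj Jj]]|[j Pj Jj]]; first by exists j.
exists j; last by rewrite Pj.
by rewrite mem_iota add0n; case/andP: Jj.
Qed.

Lemma adjP_sym G (P : pred nat) a b : adjP G P a b = adjP G P b a.
Proof. by apply/adjPP/adjPP => -[j Pj]; rewrite joins_sym => J; exists j. Qed.

Lemma joins_wf G j a b : wf G -> joins G j a b -> [/\ a < nv G, b < nv G & a != b].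
Proof.
case/andP => _ /allP Hall /andP[Hj] /=.
have /Hall/and3P[h1 h2 h3] := mem_nth (0,0) Hj.
case/orP=> /andP[/eqP E1 /eqP E2]; rewrite -E1 -E2 //; by rewrite eq_sym.
Qed.

Lemma adjP_wf G (P : pred nat) a b : wf G -> adjP G P a b -> [/\ a < nv G, b < nv G & a != b].
Proof. by move=> wG /adjPP[j _ J]; apply: joins_wf J. Qed.

Lemma walk_range G (P : pred nat) x p : wf G -> path (adjP G P) x p -> all (fun w => w < nv G) p.
Proof.
move=> wG; elim: p x => //= y p IH x /andP[A Hp].
by case: (adjP_wf wG A) => _ -> _; rewrite (IH y Hp).
Qed.

Fixpoint chain G x r es : bool :=
  match r, es with
  | [::], [::] => true
  | y :: r', e :: es' => joins G e x y && chain G y r' es'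
  | _, _ => false
  end.

Lemma chainP G x r es : chain G x r es <->
  (size es = size r /\ forall k, k < size es ->
     joins G (nth 0 es k) (nth 0 (x :: r) k) (nth 0 (x :: r) k.+1)).
Proof.
elim: r x es => [|y r IH] x [|e es] /=.
- by split => // _; split => // k.
- by split => // -[].
- by split => // -[].
- split.
  + case/andP=> J /IH[Hs Hk]; split; first by rewrite Hs.
    by case=> [|k] //= /Hk.
  + case=> [[Hs] Hk]; apply/andP; split; first exact: (Hk 0).
    by apply/IH; split => // k Hk'; apply: (Hk k.+1).
Qed.

Lemma chain_size G x r es : chain G x r es -> size es = size r.
Proof. by case/chainP. Qed.

Lemma is_path_cons G x r es : is_path G (x :: r) es <->
  [/\ uniq (x :: r), all (fun w => w < nv G) (x :: r) & chain G x r es].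
Proof.
split.
- by case=> _ U A S K; split => //; apply/chainP; split => //; rewrite S.
- case=> U A /chainP[S K]; split => //.
Qed.

Lemma chain_walk G (P : pred nat) x r es : chain G x r es -> all P es -> path (adjP G P) x r.
Proof.
elim: r x es => [|y r IH] x [|e es] //= /andP[J C] /andP[Pe Pes].
by rewrite (IH y es C Pes) andbT; apply/adjPP; exists e.
Qed.

Lemma walk_chain G (P : pred nat) x r : path (adjP G P) x r -> exists es, chain G x r es /\ all P es.
Proof.
elim: r x => [|y r IH] x /=; first by exists [::].
case/andP=> /adjPP[j Pj J] /IH[es [C A]].
by exists (j :: es); rewrite /= J C Pj A.
Qed.

Lemma walk_to_ipath G (P : pred nat) x p : wf G -> x < nv G -> path (adjP G P) x p ->
  exists p' es, [/\ is_path G (x :: p') es, all P es, last x p' = last x p & size p' <= size p].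
Proof.
move=> wG Hx Hp; have HR := walk_range wG Hp.
case: (shortenP Hp) => p' Hp' U Sub.
case: (walk_chain Hp') => es [C A].
exists p', es; split => //.
- apply/is_path_cons; split => //=; rewrite Hx /=.
  by apply/allP => w /Sub; apply: (allP HR).
- by apply: uniq_leq_size => //; case/andP: U.
Qed.

Lemma ipath_walk G u v vs es : path_from_to G u v vs es ->
  exists p, [/\ vs = u :: p, path (adj G) u p, last u p = v & size es = size p].
Proof.
case=> Hp [Hh Hl]; case: vs Hp Hh Hl => [|x p]; first by case; rewrite eqxx.
move=> /is_path_cons[U A C] /= Hh Hl; subst x.
exists p; split => //; last exact: chain_size C.
by apply: chain_walk C _; apply/allP.
Qed.

Definition conn G u v := exists p, path (adj G) u p /\ last u p = v.
Definition nolt G u v d := forall p, path (adj G) u p -> last u p = v -> d <= size p.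

Lemma walk_rev G (P : pred nat) x p : path (adjP G P) x p ->
  path (adjP G P) (last x p) (rev (belast x p)) /\ last (last x p) (rev (belast x p)) = x
  /\ size (rev (belast x p)) = size p.
Proof.
move=> Hp; split.
  rewrite rev_path; apply: sub_path Hp => a b; by rewrite adjP_sym.
split; last by rewrite size_rev size_belast.
elim: p x {Hp} => //= y p IH x.
by rewrite rev_cons last_rcons.
Qed.

Lemma conn_refl G u : conn G u u.
Proof. by exists [::]. Qed.

Lemma conn_sym G u v : conn G u v -> conn G v u.
Proof.
case=> p [Hp <-]; case: (walk_rev Hp) => H1 [H2 _].
by exists (rev (belast u p)).
Qed.

Lemma conn_trans G u v w : conn G u v -> conn G v w -> conn G u w.
Proof.
case=> p [Hp Hl] [q [Hq Hl']]; exists (p ++ q).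
by rewrite cat_path last_cat Hl Hp Hq.
Qed.

Lemma conn_adj G u v : adj G u v -> conn G u v.
Proof. by move=> A; exists [:: v]; rewrite /= A. Qed.

Definition connb G u v : bool :=
  if excluded_middle_informative (conn G u v) then true else false.

Lemma connP G u v : reflect (conn G u v) (connb G u v).
Proof. by rewrite /connb; case: excluded_middle_informative => H; constructor. Qed.

Lemma conn_range G u v : wf G -> u < nv G -> conn G u v -> v < nv G.
Proof.
move=> wG Hu [p [Hp <-]]; have := walk_range wG Hp.
have := mem_last u p; rewrite inE => /orP[/eqP->//|Hm] /allP; exact.
Qed.

Lemma joins_eq G e a b c d : joins G e a b -> joins G e c d ->
  (a = c /\ b = d) \/ (a = d /\ b = c).
Proof.
rewrite /joins /= => /andP[_ H1] /andP[_ H2].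
move: H1 H2; set p := nth _ _ _.
by case/orP=> /andP[/eqP<- /eqP<-] /orP[]/andP[/eqP<- /eqP<-]; auto.
Qed.

Lemma chain_avoid G w r es e x z : chain G w r es -> x \notin w :: r ->
  joins G e x z -> all (fun j => j != e) es.
Proof.
elim: r w es => [|w2 r IH] w [|g es] //= /andP[J C] Hx Je.
rewrite (IH w2 es C) ?andbT //; last first.
  by move: Hx; rewrite !inE negb_or => /andP[].
apply/eqP => E; subst g.
move: Hx; rewrite !inE; case: (joins_eq J Je) => -[E1 E2]; subst; by rewrite eqxx ?orbT.
Qed.

Lemma bridge G e x y p : wf G -> ~ has_cycle G -> joins G e x y ->
  path (adjP G (fun j => j != e)) x p -> last x p <> y.
Proof.
move=> wG NC Je Hp Hl.
have [Hx Hy Hxy] := joins_wf wG Je.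
case: (walk_to_ipath wG Hx Hp) => p' [es [Ip A L _]].
apply: NC; exists (x :: p'), es, e; split => //.
- case: p' {Ip A} L => [|z p'] // /= Hxy'; move: Hxy.
  by rewrite Hxy' Hl eqxx.
- by apply/negP => /(allP A); rewrite eqxx.
- by rewrite /= L Hl joins_sym.
Qed.

Lemma chain_uniq G : wf G -> ~ has_cycle G -> forall r x es r' es',
  uniq (x :: r) -> uniq (x :: r') -> chain G x r es -> chain G x r' es' ->
  last x r = last x r' -> r = r' /\ es = es'.
Proof.
move=> wG NC; elim=> [|y r IH] x [|e es] r' es' U U' C C' L //.
- case: r' es' U' C' L => [|y' r'] [|e' es'] //= U' _ L.
  by rewrite L mem_last in U'.
- case: r' es' U' C' L => [|y' r'] [|e' es'] //=.
  + move=> _ _ L; move: U; rewrite /= -L.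
    by rewrite mem_last.
  + move=> U' /andP[J' C'] L; case/andP: C => J C.
    have [Ey|Ny] := eqVneq y y'; [subst y'|]; first have [Ee|Ne] := eqVneq e e'.
    * subst e'; case: (IH y es r' es') => //.
      - by case/andP: U.
      - by case/andP: U'.
      - by move=> -> ->.
    * exfalso.
      have A1 : all (fun j => j != e) (e' :: es').
        rewrite /= eq_sym Ne /=; apply: chain_avoid C' _ J.
        by case/andP: U'.
      have A0 : all (fun j => j != e) es.
        by apply: chain_avoid C _ J; case/andP: U.
      have W1 := chain_walk (x := x) (r := y :: r') (es := e' :: es') (P := fun j => j != e).
      have W1' : path (adjP G (fun j => j != e)) x (y :: r') by apply: W1 => //=; rewrite J'.
      have W2 := chain_walk C A0; case: (walk_rev W2) => W2' [L2 _].
      apply: (bridge (p := y :: r' ++ rev (belast y r)) wG NC J).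
      - by rewrite -cat_cons cat_path W1' /= -L W2'.
      - by rewrite -cat_cons last_cat /= -L L2.
    * exfalso.
      have Ne : e' != e.
        apply/eqP => E; subst e'; case: (joins_eq J J') => -[_ E]; first by rewrite E eqxx in Ny.
        by move: U; rewrite /= E inE eqxx.
      have A1 : all (fun j => j != e) (e' :: es').
        rewrite /= Ne /=; apply: chain_avoid C' _ J.
        by case/andP: U'.
      have A0 : all (fun j => j != e) es.
        by apply: chain_avoid C _ J; case/andP: U.
      have W1 := chain_walk (x := x) (r := y' :: r') (es := e' :: es') (P := fun j => j != e).
      have W1' : path (adjP G (fun j => j != e)) x (y' :: r') by apply: W1 => //=; rewrite J'.
      have W2 := chain_walk C A0; case: (walk_rev W2) => W2' [L2 _].
      apply: (bridge (p := y' :: r' ++ rev (belast y r)) wG NC J).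
      - by rewrite -cat_cons cat_path W1' /= -L W2'.
      - by rewrite -cat_cons last_cat /= -L L2.
Qed.

Lemma tree_uniq G u v vs es vs' es' : wf G -> ~ has_cycle G ->
  path_from_to G u v vs es -> path_from_to G u v vs' es' -> vs = vs' /\ es = es'.
Proof.
move=> wG NC [P1 [H1 L1]] [P2 [H2 L2]].
case: vs P1 H1 L1 => [|x r]; first by case; rewrite eqxx.
case: vs' P2 H2 L2 => [|x' r']; first by case; rewrite eqxx.
move=> /is_path_cons[U' _ C'] /= E' L' /is_path_cons[U _ C] /= E L.
subst x x'.
case: (chain_uniq wG NC U U' C C'); first by rewrite L L'.
by move=> -> ->.
Qed.

Lemma ipath_size G vs es : is_path G vs es -> size vs = (size es).+1.
Proof. by case=> ne _ _ -> _; case: vs ne. Qed.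

Lemma usp_dist G vs es : is_usp G vs es -> dist_is G (head 0 vs) (last 0 vs) (size es).
Proof.
case=> Hp Hmin _; split; first by exists vs, es.
move=> vs' es' H'; have := Hmin _ _ H'.
by rewrite (ipath_size Hp.1) (ipath_size H'.1).
Qed.

Lemma ipath_ends G vs es : is_path G vs es -> head 0 vs < nv G /\ last 0 vs < nv G.
Proof.
case=> ne _ /allP A _ _; case: vs ne A => // x r _ A; split; apply: A => /=.
  exact: mem_head.
exact: mem_last.
Qed.

Lemma usp_bound G D vs es : diam_is G D -> is_usp G vs es -> size vs <= D.+1.
Proof.
move=> [_ Hd] U; have Hp : is_path G vs es by case: U => -[].
case: (ipath_ends Hp) => h1 h2.
rewrite (ipath_size Hp) ltnS; exact: Hd h1 h2 (usp_dist U).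
Qed.

Lemma usp_tree T D : is_tree T -> diam_is T D -> usp_is T D.+1.
Proof.
move=> [wT _ NC] Hd; split; last by move=> vs es; apply: usp_bound Hd.
case: (Hd) => -[u [v [Hu Hv [[vs [es [Hp Hs]]] Hmin]]]] _.
exists vs, es; split; last by rewrite (ipath_size Hp.1) Hs.
case: (Hp) => Ip [Hh Hl]; rewrite /is_usp Hh Hl; split => //.
- move=> vs' es' H'; rewrite (ipath_size Ip) (ipath_size H'.1) ltnS Hs.
  exact: Hmin H'.
- move=> vs' es' H' _; case: (tree_uniq wT NC H' Hp) => -> -> //.
Qed.

Lemma upper T D : is_tree T -> diam_is T D ->
  exists H, wf H /\ minor T H /\ sp_is H (nv T - D - 1).
Proof.
move=> Ht Hd; exists T; split; first by case: Ht.
split; first by apply: ob_refl; case: Ht.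
exists D.+1; split; first exact: usp_tree.
lia.
Qed.

Notation tu t := t.1.1.
Notation tv t := t.1.2.
Notation td t := t.2.

Definition Inv G s := exists l : seq (nat * nat * nat),
  [/\ uniq l,
      forall t, t \in l -> [/\ tu t < nv G, tv t < nv G, conn G (tu t) (tv t) & nolt G (tu t) (tv t) (td t)],
      forall t t', t \in l -> t' \in l -> t <> t' -> ~ conn G (tu t) (tu t'),
      forall w, w < nv G -> exists2 t, t \in l & conn G w (tu t) &
      nv G <= s + size l + sumn (map snd l)].

Definition pb (P : Prop) : bool := if excluded_middle_informative P then true else false.
Lemma pbP (P : Prop) : reflect P (pb P).
Proof. by rewrite /pb; case: excluded_middle_informative => H; constructor. Qed.

Lemma min_ex (P : nat -> Prop) : (exists n, P n) -> exists n, P n /\ forall m, P m -> n <= m.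
Proof.
move=> H; have H' : exists n, pb (P n) by case: H => n Hn; exists n; apply/pbP.
case: (ex_minnP H') => n /pbP Pn Hmin; exists n; split => // m Pm.
by apply: Hmin; apply/pbP.
Qed.

Lemma sumn_mem (x : nat) s : x \in s -> x <= sumn s.
Proof.
elim: s => //= y s IH; rewrite inE => /orP[/eqP->|/IH]; first exact: leq_addr.
move=> h; apply: leq_trans h _; exact: leq_addl.
Qed.

Lemma count_le1 (T : eqType) (p : pred T) (l : seq T) : uniq l ->
  (forall t t', t \in l -> t' \in l -> p t -> p t' -> t = t') -> count p l <= 1.
Proof.
elim: l => //= x l IH /andP[Nx U] H.
case Px: (p x) => /=.
- rewrite -[1]addn0 leq_add2l leqn0 -/(count p l) eqn0Ngt -has_count.
  apply/hasP => -[y Hy Py]; move: Nx; rewrite (H x y) ?inE ?eqxx ?Hy ?orbT //.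
- apply: IH => // t t' Ht Ht'; apply: H; by rewrite inE ?Ht ?Ht' orbT.
Qed.

Lemma sumn_filter_split (T : Type) (g : T -> nat) (p : pred T) l :
  sumn (map g l) = sumn (map g (filter p l)) + sumn (map g (filter (predC p) l)).
Proof.
elim: l => //= x l IH; case: (p x) => /=; rewrite IH; lia.
Qed.

Lemma dist_exists G u v : wf G -> u < nv G -> conn G u v ->
  exists d, dist_is G u v d /\ exists p, [/\ path (adj G) u p, last u p = v & size p = d].
Proof.
move=> wG Hu [p [Hp Hl]].
have Ex : exists n, exists vs es, path_from_to G u v vs es /\ size es = n.
  case: (walk_to_ipath wG Hu Hp) => p' [es [Ip _ L _]].
  exists (size es), (u :: p'), es; split => //; split => //; split => //=.
  by rewrite L.
case: (min_ex Ex) => d [[vs [es [Hpe Hs]]] Hmin].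
exists d; split.
  split; first by exists vs, es.
  by move=> vs' es' H'; apply: Hmin; exists vs', es'.
case: (ipath_walk Hpe) => q [_ Hq Lq Sq]; exists q; split => //; by rewrite -Sq.
Qed.

Lemma Inv_final T D s : is_tree T -> diam_is T D -> Inv T s -> nv T - D - 1 <= s.
Proof.
move=> [wT Hc NC] [_ Hd] [l [U Hent Hdis Hcov Hcnt]].
have n0 : 0 < nv T by case/andP: wT.
case: (Hcov 0 n0) => t Ht _.
have Hall : forall t', t' \in l -> t' = t.
  move=> t' Ht'; apply: NNPP => Ne; apply: (Hdis t' t Ht' Ht Ne).
  case: (Hent t' Ht') => h1 _ _ _; case: (Hent t Ht) => h2 _ _ _.
  case: (Hc _ _ h1 h2) => vs [es Hp]; case: (ipath_walk Hp) => p [_ Hp' Lp _].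
  by exists p.
have Pm : perm_eq l [:: t].
  apply: uniq_perm => // y; rewrite inE; apply/idP/eqP => [/Hall//|->//].
rewrite (perm_size Pm) (perm_sumn (perm_map snd Pm)) /= in Hcnt.
case: (Hent t Ht) => hu hv hc hn.
case: (dist_exists wT hu hc) => d [Hdist [p [Hp Lp Sp]]].
have := hn p Hp Lp; rewrite Sp => h1.
have := Hd _ _ _ hu hv Hdist => h2.
move: Hcnt h1 h2; move: (td t) (nv T) => x y; lia.
Qed.

Lemma transfer G1 G2 s (Dm : pred nat) (phi : nat -> nat) (dd : nat * nat * nat -> nat) l :
 uniq l ->
 (forall t, t \in l -> [/\ Dm (tu t), Dm (tv t), conn G1 (tu t) (tv t) & nolt G1 (tu t) (tv t) (td t)]) ->
 (forall t t', t \in l -> t' \in l -> t <> t' -> ~ conn G1 (tu t) (tu t')) ->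
 (forall w, Dm w -> exists2 t, t \in l & conn G1 w (tu t)) ->
 (forall w, Dm w -> phi w < nv G2) ->
 (forall w2, w2 < nv G2 -> exists2 w, Dm w & phi w = w2) ->
 (forall u v, Dm u -> Dm v -> conn G1 u v -> conn G2 (phi u) (phi v)) ->
 (forall u v, Dm u -> Dm v -> conn G2 (phi u) (phi v) -> conn G1 u v) ->
 (forall t, t \in l -> nolt G2 (phi (tu t)) (phi (tv t)) (dd t)) ->
 nv G2 <= s + size l + sumn (map dd l) ->
 Inv G2 s.
Proof.
move=> U Hent Hdis Hcov Hrng Hsur Hf Hb Hn Hcnt.
pose F t := (phi (tu t), phi (tv t), dd t).
have Eq : forall t t', t \in l -> t' \in l -> conn G2 (phi (tu t)) (phi (tu t')) -> t = t'.
  move=> t t' Ht Ht' C; apply: NNPP => Ne; apply: (Hdis t t' Ht Ht' Ne).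
  case: (Hent t Ht) => h1 _ _ _; case: (Hent t' Ht') => h2 _ _ _.
  exact: Hb.
exists (map F l); split.
- rewrite map_inj_in_uniq // => t t' Ht Ht' E; apply: Eq => //.
  by case: E => -> _ _; apply: conn_refl.
- move=> t' /mapP[t Ht ->]; case: (Hent t Ht) => h1 h2 h3 h4; split => /=.
  + exact: Hrng.
  + exact: Hrng.
  + exact: Hf.
  + exact: Hn.
- move=> t1 t2 /mapP[t Ht ->] /mapP[t' Ht' ->] Ne C; apply: Ne; by rewrite (Eq t t').
- move=> w2 /Hsur[w Dw <-]; case: (Hcov w Dw) => t Ht C.
  exists (F t); first exact: map_f.
  case: (Hent t Ht) => h1 _ _ _; exact: Hf.
- by rewrite size_map -map_comp.
Qed.

Lemma Inv_init H s : wf H -> sp_is H s -> Inv H s.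
Proof.
move=> wH [k [[[vs [es [Hu Hk]]] _] Hs]].
have Hu' := Hu; case: Hu' => Hpe Hmin _.
case: (Hpe) => Hp _.
case: vs Hu Hk Hpe Hmin Hp => [|p1 r]; first by move=> _ _ _ _ [].
move=> Hu Hk Hpe Hmin Hp /=.
set pk := last p1 r.
have Hsz : size (p1 :: r) = (size es).+1 by exact: ipath_size Hp.
case: (ipath_ends Hp) => /= h1 hk.
have Hkn : k <= nv H.
  rewrite -Hk -(size_iota 0 (nv H)); case: Hp => _ Un /allP A _ _.
  by apply: uniq_leq_size => // w /A; rewrite mem_iota.
have Hnolt : nolt H p1 pk (size es).
  move=> p Hq Lq; case: (walk_to_ipath wH h1 Hq) => p' [es' [Ip _ L Sz]].
  have := Hmin (p1 :: p') es'; rewrite Hsz (ipath_size Ip) ltnS => h.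
  have Es : size es' = size p' by case/is_path_cons: Ip => _ _ /chain_size.
  apply: leq_trans (h _) _; last by rewrite Es.
  by split => //; split => //=; rewrite L.
have Hconn : conn H p1 pk.
  case: (ipath_walk Hpe) => q [_ Hq Lq _]; by exists q.
pose reps := [seq w <- iota 0 (nv H) | all (fun w' => ~~ connb H w' w) (iota 0 w)].
have Hrep : forall w w', w \in reps -> w' \in reps -> conn H w w' -> w = w'.
  have K : forall w w', w \in reps -> w' \in reps -> conn H w w' -> w < w' -> False.
    move=> w w' _; rewrite mem_filter => /andP[/allP A _] C Lt.
    have := A w; rewrite mem_iota Lt => /(_ isT) /connP; exact.
  move=> w w' Hw Hw' C; case: (ltngtP w w') => // Lt; exfalso.
    exact: (K w w').
  by apply: (K w' w) => //; apply: conn_sym.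
have Cov : forall w, w < nv H -> exists2 m, m \in reps & conn H w m.
  move=> w Hw; case: (@min_ex (fun m => conn H m w)); first by exists w; apply: conn_refl.
  move=> m [Cm Hm]; exists m; last exact: conn_sym.
  have Hmw : m <= w by apply: Hm; apply: conn_refl.
  rewrite mem_filter mem_iota /= (leq_ltn_trans Hmw Hw) andbT.
  apply/allP => w'; rewrite mem_iota /= => Lt; apply/connP => C.
  have := Hm w' (conn_trans C Cm); rewrite leqNgt Lt; done.
pose f w := if connb H w p1 then (p1, pk, size es) else (w, w, 0).
exists (map f reps); split.
- rewrite map_inj_in_uniq ?filter_uniq ?iota_uniq // => w w' Hw Hw'.
  rewrite /f; case: (connP H w p1) => C; case: (connP H w' p1) => C'.
  + by move=> _; apply: Hrep => //; apply: conn_trans C (conn_sym C').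
  + by case=> E _ _; exfalso; apply: C'; rewrite -E; apply: conn_refl.
  + by case=> E _ _; exfalso; apply: C; rewrite E; apply: conn_refl.
  + by case.
- move=> t /mapP[w Hw ->]; rewrite /f; case: (connP H w p1) => C /=.
  + by split.
  + move: Hw; rewrite mem_filter mem_iota /= => /andP[_ Hw].
    split => //; try exact: conn_refl; by move=> *.
- move=> t1 t2 /mapP[w Hw ->] /mapP[w' Hw' ->] Ne Cn; apply: Ne.
  have Cw : forall z, z \in reps -> conn H z (tu (f z)).
    by move=> z _; rewrite /f; case: (connP H z p1) => C //=; apply: conn_refl.
  rewrite (Hrep w w') //.
  apply: conn_trans (Cw w Hw) (conn_trans Cn (conn_sym (Cw w' Hw'))).
- move=> w Hw; case: (Cov w Hw) => m Hm C; exists (f m); first exact: map_f.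
  rewrite /f; case: (connP H m p1) => Cp //=; exact: conn_trans C Cp.
- case: (Cov p1 h1) => m Hm C.
  have Fm : f m = (p1, pk, size es) by rewrite /f; case: (connP H m p1) => // C'; case: C'; apply: conn_sym.
  have Hin : f m \in map f reps by exact: map_f.
  have Hsum : size es <= sumn (map snd (map f reps)).
    by apply: sumn_mem; apply/mapP; exists (f m) => //; rewrite Fm.
  have Hsz1 : 0 < size (map f reps) by case: (map f reps) Hin.
  move: Hsum Hsz1 Hkn; rewrite Hs -Hk Hsz.
  move: (sumn _) (size (map f reps)) (size es) (nv H) => a b c n; lia.
Qed.

Definition unshift x a := if x <= a then a.+1 else a.

Lemma shiftK x e : e != x -> unshift x (shift x e) = e.
Proof. rewrite /unshift /shift => /eqP ?; case: (ltnP x e) => H; case: leqP => H' //; lia. Qed.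

Lemma unshiftK x a : shift x (unshift x a) = a.
Proof. rewrite /unshift /shift; case: (leqP x a) => H; case: ltnP => H' //; lia. Qed.

Lemma unshift_neq x a : unshift x a != x.
Proof. rewrite /unshift; case: (leqP x a) => H; apply/eqP; lia. Qed.

Lemma shift_eq x e a : e != x -> (shift x e == a) = (e == unshift x a).
Proof.
move=> Ne; apply/eqP/eqP => [<-|->]; first by rewrite shiftK.
by rewrite unshiftK.
Qed.

Lemma path_map_rel (e1 e2 : rel nat) f x p : (forall a b, e1 a b -> e2 (f a) (f b)) ->
  path e1 x p -> path e2 (f x) (map f p).
Proof.
move=> H; elim: p x => //= y p IH x /andP[A P]; by rewrite H // IH.
Qed.

Lemma isolated_adj G x a b : isolated G x -> adj G a b -> a != x /\ b != x.
Proof.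
case/andP=> _ /allP A /adjPP[j _ /andP[Hj /= J]].
have /A/andP[h1 h2] := mem_nth (0,0) Hj.
by case/orP: J => /andP[/eqP<- /eqP<-].
Qed.

Lemma joins_del G x j a b : isolated G x ->
  joins (del_vertex G x) j a b = joins G j (unshift x a) (unshift x b).
Proof.
case/andP=> _ /allP A; rewrite /joins /del_vertex /= size_map.
case Hj: (j < size (edges G)) => //=.
rewrite (nth_map (0,0)) //=.
have /A/andP[h1 h2] := mem_nth (0,0) Hj.
by rewrite !shift_eq.
Qed.

Lemma adj_del G x a b : isolated G x ->
  adj (del_vertex G x) a b = adj G (unshift x a) (unshift x b).
Proof.
move=> I; apply/adjPP/adjPP => -[j _ J]; exists j => //; by rewrite ?joins_del // -?joins_del.
Qed.

Lemma conn_isolated G x w : isolated G x -> conn G w x -> w = x.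
Proof.
move=> I [p [Hp Hl]]; move: Hp Hl; case/lastP: p => [//|p z].
rewrite rcons_path last_rcons => /andP[_ A] Ez; subst z.
by case: (isolated_adj I A) => _; rewrite eqxx.
Qed.

Lemma sumn0 (T : eqType) (g : T -> nat) (s : seq T) : (forall t, t \in s -> g t = 0) -> sumn (map g s) = 0.
Proof. elim: s => //= y s IH H; rewrite H ?inE ?eqxx // IH // => t Ht; apply: H; by rewrite inE Ht orbT. Qed.

Lemma step_delv G x s : wf G -> isolated G x -> Inv G s -> Inv (del_vertex G x) s.
Proof.
move=> wG I [l [U Hent Hdis Hcov Hcnt]].
have Hx : x < nv G by case/andP: I.
have CI : forall w, conn G x w -> w = x by move=> w /conn_sym; apply: conn_isolated.
pose l0 := filter (fun t => tu t != x) l.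
apply: (@transfer G _ s (fun w => (w < nv G) && (w != x)) (shift x) snd l0).
- exact: filter_uniq.
- move=> t; rewrite mem_filter => /andP[Nx Ht]; case: (Hent t Ht) => h1 h2 h3 h4.
  split => //; rewrite ?h1 ?h2 //=; apply/eqP => E; move/eqP: Nx; apply.
  by apply: conn_isolated I _; rewrite -E.
- move=> t t'; rewrite !mem_filter => /andP[_ Ht] /andP[_ Ht']; exact: Hdis.
- move=> w /andP[Hw Nw]; case: (Hcov w Hw) => t Ht C; exists t => //.
  rewrite mem_filter Ht andbT; apply/eqP => E; move/eqP: Nw; apply.
  by apply: conn_isolated I _; rewrite -E.
- move=> w /andP[Hw Nw] /=; rewrite /shift; move/eqP: Nw => Nw.
  case: (ltnP x w) => h; lia.
- move=> w2 /= H2; exists (unshift x w2); last exact: unshiftK.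
  rewrite unshift_neq andbT /unshift; case: (leqP x w2) => h; lia.
- move=> u v /andP[_ Nu] /andP[_ Nv] [p [Hp Hl]]; exists (map (shift x) p); split.
  + apply: path_map_rel Hp => a b A; case: (isolated_adj I A) => Na Nb.
    by rewrite adj_del // !shiftK.
  + by rewrite last_map Hl.
- move=> u v /andP[_ Nu] /andP[_ Nv] [p [Hp Hl]]; exists (map (unshift x) p); split.
  + have W := @path_map_rel (adj (del_vertex G x)) (adj G) (unshift x) (shift x u) p.
    rewrite shiftK // in W; apply: W Hp => a b; by rewrite adj_del.
  + by rewrite -{1}(shiftK Nu) last_map Hl shiftK.
- move=> t; rewrite mem_filter => /andP[Nx Ht]; case: (Hent t Ht) => h1 h2 h3 h4.
  have Nv : tv t != x by apply/eqP => E; move/eqP: Nx; apply; apply: conn_isolated I _; rewrite -E.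
  move=> p Hp Hl; rewrite -(size_map (unshift x)); apply: h4.
  + have W := @path_map_rel (adj (del_vertex G x)) (adj G) (unshift x) (shift x (tu t)) p.
    rewrite shiftK // in W; apply: W Hp => a b; by rewrite adj_del.
  + by rewrite -{1}(shiftK Nx) last_map Hl shiftK.
- have C1 : count (fun t => ~~ (tu t != x)) l = 1.
    apply/eqP; rewrite eqn_leq; apply/andP; split.
    + apply: count_le1 => // t t' Ht Ht' /negPn/eqP E /negPn/eqP E'.
      apply: NNPP => Ne; apply: (Hdis t t' Ht Ht' Ne); rewrite E E'; exact: conn_refl.
    + rewrite -has_count; apply/hasP; case: (Hcov x Hx) => t Ht C.
      by exists t => //; rewrite (CI _ C) eqxx.
  have S0 : sumn (map snd (filter (predC (fun t => tu t != x)) l)) = 0.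
    apply: sumn0 => t; rewrite mem_filter /= => /andP[/negPn/eqP E Ht].
    case: (Hent t Ht) => _ _ h3 h4; apply/eqP; rewrite -leqn0.
    have E' : tv t = x by apply: CI; rewrite -E.
    by apply: (h4 [::]) => //=; rewrite E E'.
  have Sz : size l = size l0 + 1 by rewrite -C1 size_filter count_predC.
  move: Hcnt; rewrite (sumn_filter_split _ (fun t => tu t != x)) S0 Sz /del_vertex /=.
  move: (sumn _) (size l0) (nv G) => a b n; lia.
Qed.

Lemma dist_nolt G u v d : wf G -> u < nv G -> dist_is G u v d -> nolt G u v d.
Proof.
move=> wG Hu [_ Hmin] p Hp Hl.
case: (walk_to_ipath wG Hu Hp) => p' [es [Ip _ L Sz]].
have Es : size es = size p' by case/is_path_cons: Ip => _ _ /chain_size.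
apply: leq_trans (Hmin (u :: p') es _) _; last by rewrite Es.
by split => //; split => //=; rewrite L.
Qed.

Lemma nolt_sub G G2 u v d : (forall a b, adj G2 a b -> adj G a b) -> nolt G u v d -> nolt G2 u v d.
Proof. by move=> H N p Hp Hl; apply: N => //; apply: sub_path Hp. Qed.

Lemma conn_sub G G2 u v : (forall a b, adj G2 a b -> adj G a b) -> conn G2 u v -> conn G u v.
Proof. by move=> H [p [Hp Hl]]; exists p; split => //; apply: sub_path Hp. Qed.

Section Split.
Variables (G G2 : mgraph) (p q : nat).
Hypothesis H1 : forall a b, adj G2 a b -> adj G a b.
Hypothesis H2 : forall a b, adj G a b -> adj G2 a b \/ (a = p /\ b = q) \/ (a = q /\ b = p).

Lemma claim w r : path (adj G) w r ->
  conn G2 w (last w r) \/ ((conn G2 w p \/ conn G2 w q) /\ (conn G2 (last w r) p \/ conn G2 (last w r) q)).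
Proof.
elim: r w => [|w1 r IH] w /=; first by left; apply: conn_refl.
case/andP=> A /IH {IH} IH.
have Ew : (conn G2 w p \/ conn G2 w q) -> (conn G2 w1 p \/ conn G2 w1 q) ->
   conn G2 w1 (last w1 r) \/ ((conn G2 w1 p \/ conn G2 w1 q) /\ (conn G2 (last w1 r) p \/ conn G2 (last w1 r) q)) ->
   conn G2 w (last w1 r) \/ ((conn G2 w p \/ conn G2 w q) /\ (conn G2 (last w1 r) p \/ conn G2 (last w1 r) q)).
  move=> Hw Hw1 [C|[_ C]]; right; split => //.
  case: Hw1 => C1; [left|right]; apply: conn_trans (conn_sym C) C1.
case: (H2 A) => [A2|[[E E']|[E E']]]; last 2 first.
- by subst w w1; apply: Ew => //; [left|right]; apply: conn_refl.
- by subst w w1; apply: Ew => //; [right|left]; apply: conn_refl.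
- case: IH => [C|[[C|C] D]].
  + by left; apply: conn_trans (conn_adj A2) C.
  + by right; split => //; left; apply: conn_trans (conn_adj A2) C.
  + by right; split => //; right; apply: conn_trans (conn_adj A2) C.
Qed.

Lemma claim_conn w z : conn G w z ->
  conn G2 w z \/ ((conn G2 w p \/ conn G2 w q) /\ (conn G2 z p \/ conn G2 z q)).
Proof. by case=> r [Hr <-]; apply: claim. Qed.

Hypothesis H3 : adj G p q.
Hypothesis H4 : ~ conn G2 p q.
Hypothesis Hnv : nv G2 = nv G.
Hypothesis wG : wf G.
Hypothesis wG2 : wf G2.

Lemma split_pair u0 v0 d0 : u0 < nv G -> v0 < nv G -> conn G u0 v0 -> nolt G u0 v0 d0 ->
  conn G2 u0 p ->
  exists e1 e2 : nat * nat * nat,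
    [/\ [/\ tu e1 < nv G2, tv e1 < nv G2, conn G2 (tu e1) (tv e1) & nolt G2 (tu e1) (tv e1) (td e1)],
        [/\ tu e2 < nv G2, tv e2 < nv G2, conn G2 (tu e2) (tv e2) & nolt G2 (tu e2) (tv e2) (td e2)],
        conn G2 (tu e1) p, conn G2 (tu e2) q & d0 <= td e1 + td e2 + 1].
Proof.
move=> hu hv C N Cu.
have [hp hq _] := adjP_wf wG H3.
have Cv : conn G2 v0 p \/ conn G2 v0 q.
  case: (claim_conn C) => [C2|[_ D]]; last by [].
  by left; apply: conn_trans (conn_sym C2) Cu.
case: Cv => Cv.
- exists (u0, v0, d0), (q, q, 0); split => //=.
  + split; rewrite ?Hnv //; first by apply: conn_trans Cu (conn_sym Cv).
    exact: nolt_sub N.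
  + by split; rewrite ?Hnv //; try apply: conn_refl; move=> *.
  + exact: conn_refl.
  + by rewrite addn0 leq_addr.
- have hu2 : u0 < nv G2 by rewrite Hnv.
  have hq2 : q < nv G2 by rewrite Hnv.
  case: (dist_exists wG2 hu2 Cu) => d1 [D1 [r1 [R1 L1 S1]]].
  case: (dist_exists wG2 hq2 (conn_sym Cv)) => d2 [D2 [r2 [R2 L2 S2]]].
  exists (u0, p, d1), (q, v0, d2); split => //=.
  + split; rewrite ?Hnv //; exact: dist_nolt D1.
  + split; rewrite ?Hnv //; [exact: conn_sym | exact: dist_nolt D2].
  + exact: conn_refl.
  + have W : path (adj G) u0 (r1 ++ q :: r2).
      rewrite cat_path /= (sub_path H1 R1) L1 H3 /=. exact: (sub_path H1 R2).
    have := N _ W; rewrite last_cat /= L2 => /(_ erefl).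
    rewrite size_cat /= S1 S2; lia.
Qed.

Lemma split_inv s (l : seq (nat * nat * nat)) t0 :
  uniq l ->
  (forall t, t \in l -> [/\ tu t < nv G, tv t < nv G, conn G (tu t) (tv t) & nolt G (tu t) (tv t) (td t)]) ->
  (forall t t', t \in l -> t' \in l -> t <> t' -> ~ conn G (tu t) (tu t')) ->
  (forall w, w < nv G -> exists2 t, t \in l & conn G w (tu t)) ->
  nv G <= s + size l + sumn (map snd l) ->
  t0 \in l -> conn G2 (tu t0) p -> Inv G2 s.
Proof.
move=> U Hent Hdis Hcov Hcnt Ht0 Cp.
case: (Hent t0 Ht0) => hu hv hc hn.
case: (split_pair hu hv hc hn Cp) => e1 [e2 [E1 E2 C1 C2 Hd]].
have Cpu : conn G p (tu t0) by apply: conn_sym; apply: conn_sub H1 Cp.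
have Cqu : conn G q (tu t0) by apply: conn_trans (conn_sym (conn_adj H3)) Cpu.
have Hrem : forall t, t \in rem t0 l -> t \in l /\ t <> t0.
  move=> t; rewrite mem_rem_uniq // inE => /andP[/eqP Ne Ht]; by split.
have Bad : forall t, t \in rem t0 l -> ~ conn G (tu t) (tu t0).
  by move=> t /Hrem[Ht Ne]; apply: Hdis.
have Badp : forall t, t \in rem t0 l -> ~ conn G2 (tu t) p.
  move=> t Ht C; apply: (Bad t Ht); apply: conn_trans (conn_sub H1 C) Cpu.
have Badq : forall t, t \in rem t0 l -> ~ conn G2 (tu t) q.
  move=> t Ht C; apply: (Bad t Ht); apply: conn_trans (conn_sub H1 C) Cqu.
have NBad : forall t w, t \in rem t0 l -> conn G w (tu t) -> conn G2 w (tu t).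
  move=> t w Ht C; case: (claim_conn C) => // -[_ [D|D]]; exfalso;
    [exact: (Badp t Ht) | exact: (Badq t Ht)].
exists [:: e1, e2 & rem t0 l]; split.
- rewrite /= rem_uniq // andbT inE negb_or -andbA; apply/and3P; split.
  + apply/eqP => E; apply: H4; apply: conn_trans (conn_sym C1) _; by rewrite E.
  + apply/negP => /[dup] Ht /Badp; apply; exact: C1.
  + apply/negP => /[dup] Ht /Badq; apply; exact: C2.
- move=> t; rewrite !inE => /orP[/eqP->//|/orP[/eqP->//|Ht]].
  case: (Hrem t Ht) => Ht' _; case: (Hent t Ht') => h1 h2 h3 h4.
  split; rewrite ?Hnv //; [exact: (conn_sym (NBad _ _ Ht (conn_sym h3))) | exact: (nolt_sub H1 h4)].
- have Rst : forall t, t \in rem t0 l -> forall t', t' \in [:: e1, e2 & rem t0 l] -> t <> t' ->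
      ~ conn G2 (tu t) (tu t').
    move=> t Ht t'; rewrite !inE => /orP[/eqP->|/orP[/eqP->|Ht']] Ne C.
    + by apply: (Badp t Ht); apply: conn_trans C C1.
    + by apply: (Badq t Ht); apply: conn_trans C C2.
    + case: (Hrem t Ht) => h _; case: (Hrem t' Ht') => h' _.
      by apply: (Hdis t t' h h' Ne); apply: conn_sub H1 C.
  move=> t t' Ht Ht' Ne C; move: Ht Ht'.
  rewrite !inE => /orP[/eqP Et|/orP[/eqP Et|Ht]]; last first.
    by move=> Ht'; apply: (Rst t Ht t') => //; rewrite !inE Ht' ?orbT.
  + move=> /orP[/eqP Et'|/orP[/eqP Et'|Ht']].
    * rewrite Et Et' in C.
      by apply: H4; apply: conn_trans (conn_sym C1) (conn_trans (conn_sym C) C2).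
    * by apply: Ne; rewrite Et Et'.
    * rewrite Et in C Ne.
      apply: (Rst t' Ht' e2) => //; [by rewrite !inE eqxx orbT | by move=> E; apply: Ne | exact: conn_sym].
  + move=> /orP[/eqP Et'|/orP[/eqP Et'|Ht']].
    * by apply: Ne; rewrite Et Et'.
    * rewrite Et Et' in C.
      by apply: H4; apply: conn_trans (conn_sym C1) (conn_trans C C2).
    * rewrite Et in C Ne.
      apply: (Rst t' Ht' e1) => //; [by rewrite !inE eqxx | by move=> E; apply: Ne | exact: conn_sym].
- move=> w; rewrite Hnv => Hw.
  have [Cw|NCw] := classic (conn G w (tu t0)).
  + have : conn G w p by apply: conn_trans Cw (conn_sym Cpu).
    case/claim_conn => [D|[[D|D] _]].
    * by exists e1; [rewrite inE eqxx | apply: conn_trans D (conn_sym C1)].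
    * by exists e1; [rewrite inE eqxx | apply: conn_trans D (conn_sym C1)].
    * by exists e2; [rewrite !inE eqxx orbT | apply: conn_trans D (conn_sym C2)].
  + case: (Hcov w Hw) => t Ht C.
    have Ht' : t \in rem t0 l.
      rewrite mem_rem_uniq // inE Ht andbT; apply/eqP => E; apply: NCw; by rewrite -E.
    by exists t; [rewrite !inE Ht' !orbT | apply: NBad].
- rewrite /= Hnv.
  have Sz : size l = (size (rem t0 l)).+1 by rewrite size_rem // prednK //; case: (l) Ht0.
  have Sm : sumn (map snd l) = td t0 + sumn (map snd (rem t0 l)).
    by rewrite (perm_sumn (perm_map snd (perm_to_rem Ht0))).
  move: Hcnt Hd; rewrite Sz Sm.
  move: (sumn _) (size (rem t0 l)) (td t0) (td e1) (td e2) (nv G) => a b c d1 d2 n; lia.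
Qed.

End Split.

Lemma nth_del (s : seq (nat * nat)) i j : i < size s ->
  nth (0,0) (take i s ++ drop i.+1 s) j = nth (0,0) s (if j < i then j else j.+1).
Proof.
move=> Hi; rewrite nth_cat size_take Hi; case: ltnP => h; first by rewrite nth_take.
rewrite nth_drop; congr nth; lia.
Qed.

Lemma joins_dele G i j a b : i < size (edges G) ->
  joins (del_edge G i) j a b = joins G (if j < i then j else j.+1) a b.
Proof.
move=> Hi; rewrite /joins /del_edge /= nth_del //.
congr andb; rewrite size_cat size_take Hi size_drop.
case: (ltnP j i) => h; apply/idP/idP; lia.
Qed.

Lemma step_dele G i s : wf G -> wf (del_edge G i) -> i < size (edges G) -> Inv G s -> Inv (del_edge G i) s.
Proof.
move=> wG wG2 Hi [l [U Hent Hdis Hcov Hcnt]].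
set G2 := del_edge G i.
set x := (nth (0,0) (edges G) i).1; set y := (nth (0,0) (edges G) i).2.
have Hnv : nv G2 = nv G by [].
have H1 : forall a b, adj G2 a b -> adj G a b.
  move=> a b /adjPP[j _ J]; apply/adjPP; exists (if j < i then j else j.+1) => //.
  by rewrite -joins_dele.
have H2 : forall a b, adj G a b -> adj G2 a b \/ (a = x /\ b = y) \/ (a = y /\ b = x).
  move=> a b /adjPP[j _ J]; have [E|Ne] := eqVneq j i.
  - subst j; right; case/andP: J => _ /= /orP[]/andP[/eqP<- /eqP<-]; by [left|right].
  - left; apply/adjPP; exists (if j < i then j else j.-1) => //.
    rewrite joins_dele //; move: J; congr joins.
    move/eqP: Ne => Ne; case: (ltnP j i) => h; first by rewrite h.
    have -> : (j.-1 < i) = false by apply/negbTE; rewrite -leqNgt; lia.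
    lia.
have H3 : adj G x y by apply/adjPP; exists i => //; rewrite /joins Hi /= !eqxx.
have [Cxy|NCxy] := classic (conn G2 x y).
- have Hc : forall a b, conn G a b -> conn G2 a b.
    move=> a b C; case: (claim_conn H2 C) => // -[Ca Cb].
    have Ha : conn G2 a x by case: Ca => // C'; apply: conn_trans C' (conn_sym Cxy).
    have Hb : conn G2 b x by case: Cb => // C'; apply: conn_trans C' (conn_sym Cxy).
    exact: conn_trans Ha (conn_sym Hb).
  exists l; split => //.
  + move=> t /Hent[h1 h2 h3 h4]; split => //; [exact: Hc | exact: nolt_sub H1 h4].
  + move=> t t' Ht Ht' Ne C; apply: (Hdis t t' Ht Ht' Ne); exact: conn_sub H1 C.
  + move=> w Hw; case: (Hcov w Hw) => t Ht C; exists t => //; exact: Hc.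
- have [hx hy _] := adjP_wf wG H3.
  case: (Hcov x hx) => t0 Ht0 C0.
  case: (claim_conn H2 (conn_sym C0)) => [C|[[C|C] _]].
  + exact: (split_inv H1 H2 H3 NCxy Hnv wG wG2 U Hent Hdis Hcov Hcnt Ht0 C).
  + exact: (split_inv H1 H2 H3 NCxy Hnv wG wG2 U Hent Hdis Hcov Hcnt Ht0 C).
  + have H2' : forall a b, adj G a b -> adj G2 a b \/ (a = y /\ b = x) \/ (a = x /\ b = y).
      by move=> a b /H2[|[]]; auto.
    have H3' : adj G y x by rewrite /adj adjP_sym.
    have NC' : ~ conn G2 y x by move=> /conn_sym.
    exact: (split_inv H1 H2' H3' NC' Hnv wG wG2 U Hent Hdis Hcov Hcnt Ht0 C).
Qed.

Section Contract.
Variables (G : mgraph) (i : nat).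
Hypothesis wG : wf G.
Hypothesis Hi : i < size (edges G).

Definition ca := (nth (0,0) (edges G) i).1.
Definition cb := (nth (0,0) (edges G) i).2.
Definition ren w := shift cb (if w == cb then ca else w).
Definition G2 := contract G i.

Lemma joins_i : joins G i ca cb.
Proof. by rewrite /joins Hi /= /ca /cb !eqxx. Qed.

Lemma ab_props : [/\ ca < nv G, cb < nv G & ca != cb].
Proof. exact: joins_wf wG joins_i. Qed.

Lemma joins_con j p q : joins G2 j p q =
  (j < (size (edges G)).-1) &&
  (let e := nth (0,0) (edges G) (if j < i then j else j.+1) in
   ((ren e.1 == p) && (ren e.2 == q)) || ((ren e.1 == q) && (ren e.2 == p))).
Proof.
rewrite /joins /G2 /contract /= size_map size_cat size_take Hi size_drop.
have -> : i + (size (edges G) - i.+1) = (size (edges G)).-1 by lia.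
case Hj: (j < _) => //=.
rewrite (nth_map (0,0)); last by rewrite size_cat size_take Hi size_drop; lia.
by rewrite nth_del.
Qed.

Lemma nv2 : nv G2 = (nv G).-1.
Proof. by []. Qed.

Lemma ren_a : ren ca = ren cb.
Proof.
rewrite /ren eqxx; case: ab_props => _ _ /negbTE ->; done.
Qed.

Lemma ren_m w : ren w = ren ca -> w = ca \/ w = cb.
Proof.
rewrite /ren; case: ab_props => _ _ Nab; rewrite (negbTE Nab).
case: (eqVneq w cb) => [->|Nw]; first by right.
move/(congr1 (unshift cb)); rewrite !shiftK // => ->; by left.
Qed.

Lemma ren_inj w z : ren w = ren z -> ren w != ren ca -> w = z.
Proof.
move=> E N; have Nw : w != cb by apply: contra N => /eqP->; rewrite ren_a.
have Nwa : w != ca by apply: contra N => /eqP->.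
have Nz : z != cb by apply: contra N => /eqP E'; rewrite E E' ren_a.
move: E; rewrite /ren (negbTE Nw) (negbTE Nz) => /(congr1 (unshift cb)).
by rewrite !shiftK.
Qed.

Lemma ren_range w : w < nv G -> ren w < nv G2.
Proof.
case: ab_props => ha hb Nab Hw; rewrite nv2 /ren.
case: (eqVneq w cb) => [E|Nw]; rewrite /shift.
  case: (ltnP cb ca) => h; move/eqP: Nab => Nab; lia.
case: (ltnP cb w) => h; move/eqP: Nw => Nw; lia.
Qed.

Lemma ren_surj w2 : w2 < nv G2 -> exists2 w, w < nv G & ren w = w2.
Proof.
case: ab_props => ha hb Nab; rewrite nv2 => H; exists (unshift cb w2).
  rewrite /unshift; case: (leqP cb w2) => h; lia.
by rewrite /ren (negbTE (unshift_neq _ _)) unshiftK.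
Qed.

Lemma adj2_lift p q : adj G2 p q -> exists w z, [/\ adj G w z, ren w = p & ren z = q].
Proof.
case/adjPP=> j _; rewrite joins_con => /andP[Hj J].
set j' := if j < i then j else j.+1.
have Hj' : j' < size (edges G) by rewrite /j'; case: (ltnP j i) => h; lia.
set e := nth (0,0) (edges G) j'.
have Je : joins G j' e.1 e.2 by rewrite /joins Hj' /= !eqxx.
have Ae : adj G e.1 e.2 by apply/adjPP; exists j'.
case/orP: J => /andP[/eqP E1 /eqP E2].
- by exists e.1, e.2.
- exists e.2, e.1; split => //; by rewrite /adj adjP_sym.
Qed.

Lemma adj_push w z : adj G w z -> ren w != ren z -> adj G2 (ren w) (ren z).
Proof.
case/adjPP=> j _ J N; have Hj : j < size (edges G) by case/andP: J.
have [E|Nj] := eqVneq j i.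
  subst j; case: (joins_eq J joins_i) => -[E1 E2]; subst w z; by rewrite ?ren_a eqxx in N.
apply/adjPP; exists (if j < i then j else j.-1) => //.
rewrite joins_con; apply/andP; split.
  move/eqP: Nj => Nj; case: (ltnP j i) => h; lia.
have -> : (if (if j < i then j else j.-1) < i then if j < i then j else j.-1
           else (if j < i then j else j.-1).+1) = j.
  move/eqP: Nj => Nj; case: (ltnP j i) => h; first by rewrite h.
  have -> : (j.-1 < i) = false by apply/negbTE; rewrite -leqNgt; lia.
  lia.
case/andP: J => _ /= /orP[]/andP[/eqP-> /eqP->]; by rewrite !eqxx ?orbT.
Qed.

Lemma walk_push w r : path (adj G) w r ->
  exists r', [/\ path (adj G2) (ren w) r', last (ren w) r' = ren (last w r) & size r' <= size r].
Proof.
elim: r w => [|w1 r IH] w /=; first by move=> _; exists [::].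
case/andP=> A /IH[r' [P L S]].
have [E|N] := eqVneq (ren w) (ren w1).
- exists r'; split => //; [by rewrite E | by rewrite E | by apply: leq_trans S _].
- exists (ren w1 :: r'); split => //=; by rewrite ?adj_push ?P.
Qed.

Lemma conn_push u v : conn G u v -> conn G2 (ren u) (ren v).
Proof.
case=> r [Hr <-]; case: (walk_push Hr) => r' [P L _]; by exists r'.
Qed.

Lemma lift_exact r u v : u < nv G -> path (adj G2) (ren u) r -> last (ren u) r = ren v ->
  ren ca \notin ren u :: r -> exists r0, [/\ path (adj G) u r0, last u r0 = v & size r0 = size r].
Proof.
elim: r u => [|q r IH] u Hu /=.
- move=> _ E; rewrite inE => N; exists [::]; split => //=.
  by apply: ren_inj => //; rewrite eq_sym.
- case/andP=> A P L; rewrite !inE negb_or => /andP[N1 N2].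
  case: (adj2_lift A) => w [z [Awz Ew Ez]].
  have Ewu : w = u by apply: ren_inj; rewrite ?Ew // eq_sym.
  subst w; have [_ hz _] := adjP_wf wG Awz.
  case: (IH z hz); rewrite ?Ez //.
  move=> r0 [P0 L0 S0]; exists (z :: r0); split => /=; by rewrite ?Awz ?P0 ?S0.
Qed.

Lemma adj_ab : adj G ca cb.
Proof. by apply/adjPP; exists i => //; apply: joins_i. Qed.

Lemma from_m n r v : size r <= n -> v < nv G -> path (adj G2) (ren ca) r -> last (ren ca) r = ren v ->
  exists z r0, [/\ z = ca \/ z = cb, path (adj G) z r0, last z r0 = v & size r0 <= size r].
Proof.
elim: n r => [|n IH] r.
- rewrite leqn0 => /nilP -> Hv _ /= E; case: (ren_m (esym E)) => E'.
  + by exists ca, [::]; split; auto.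
  + by exists cb, [::]; split; auto.
- move=> Sr Hv P L.
  have [Hm|Nm] := boolP (ren ca \in r).
  + case/splitPr: Hm P L Sr => r1 r2 P L Sr.
    rewrite cat_path /= in P; case/and3P: P => _ _ P2.
    rewrite last_cat /= in L.
    case: (IH r2 _ Hv P2 L) => [|z [r0 [Hz P0 L0 S0]]].
      by rewrite size_cat /= in Sr; lia.
    exists z, r0; split => //; rewrite size_cat /=; lia.
  + case: r P L Sr Nm => [|q r] P L Sr Nm.
      by case: (IH [::] _ Hv P L) => // z [r0 [Hz P0 L0 S0]]; exists z, r0.
    move: P => /= /andP[A P]; case: (adj2_lift A) => w [z [Awz Ew Ez]].
    have [_ hz _] := adjP_wf wG Awz.
    have Nm' : ren ca \notin ren z :: r by rewrite Ez.
    have P' : path (adj G2) (ren z) r by rewrite Ez.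
    have L' : last (ren z) r = ren v by rewrite Ez.
    case: (lift_exact hz P' L' Nm') => r0 [P0 L0 S0].
    exists w, (z :: r0); split => //=.
    * exact: ren_m.
    * by rewrite Awz P0.
    * by rewrite S0.
Qed.

Lemma lift1 r u v : u < nv G -> v < nv G -> path (adj G2) (ren u) r -> last (ren u) r = ren v ->
  exists r0, [/\ path (adj G) u r0, last u r0 = v & size r0 <= size r + (ren ca \in ren u :: r)].
Proof.
move=> Hu Hv; have [Hm|Nm] := boolP (ren ca \in ren u :: r); last first.
  move=> P L; case: (lift_exact Hu P L Nm) => r0 [P0 L0 S0].
  by exists r0; split => //; rewrite S0 addn0.
elim: r u Hu Hm => [|q r IH] u Hu Hm P L.
- rewrite /= in L; move: Hm; rewrite inE eq_sym => /eqP Em.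
  case: (ren_m Em) => Eu; case: (ren_m (etrans (esym L) Em)) => Ev; subst.
  + by exists [::].
  + by exists [:: cb]; split => //; apply/andP; split => //; exact: adj_ab.
  + exists [:: ca]; split => //; apply/andP; split => //.
    by rewrite /adj adjP_sym; exact: adj_ab.
  + by exists [::].
- have [Eu|Nu] := eqVneq (ren u) (ren ca).
  + rewrite Eu in P L.
    case: (@from_m (size (q :: r)) (q :: r) v (leqnn _) Hv P L) => z [r0 [Hz P0 L0 S0]].
    case: (ren_m Eu) => Eu'; subst u.
    * case: Hz => Ez; subst z.
      - by exists r0; split => //; lia.
      - exists (cb :: r0); split => //=; last (move: S0; simpl; lia).
        by rewrite P0 andbT; exact: adj_ab.
    * case: Hz => Ez; subst z.
      - exists (ca :: r0); split => //=; last (move: S0; simpl; lia).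
        by rewrite P0 andbT /adj adjP_sym; exact: adj_ab.
      - by exists r0; split => //; lia.
  + move: P => /= /andP[A P]; case: (adj2_lift A) => w [z [Awz Ew Ez]].
    have Ewu : w = u by apply: ren_inj; rewrite ?Ew.
    subst w; have [_ hz _] := adjP_wf wG Awz.
    have Hm' : ren ca \in ren z :: r by move: Hm; rewrite !inE eq_sym (negbTE Nu) Ez.
    have P' : path (adj G2) (ren z) r by rewrite Ez.
    have L' : last (ren z) r = ren v by rewrite Ez.
    case: (IH z hz Hm' P' L') => r0 [P0 L0 S0].
    exists (z :: r0); split => //=; try by rewrite Awz.
    all: try (move: S0; simpl; lia).
Qed.

Lemma conn_pull u v : u < nv G -> v < nv G -> conn G2 (ren u) (ren v) -> conn G u v.
Proof.
move=> Hu Hv [r [P L]]; case: (lift1 Hu Hv P L) => r0 [P0 L0 _]; by exists r0.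
Qed.

Lemma hit_m u r : u < nv G -> path (adj G2) (ren u) r -> ren ca \in ren u :: r -> conn G u ca.
Proof.
move=> Hu P Hm; have [ha _ _] := ab_props; apply: conn_pull => //.
move: Hm; rewrite inE => /orP[/eqP<-|Hm]; first exact: conn_refl.
case/splitPr: Hm P => r1 r2; rewrite cat_path => /andP[P1 /= /andP[A _]].
by exists (rcons r1 (ren ca)); rewrite rcons_path P1 A last_rcons.
Qed.

End Contract.

Lemma sumn_dec (T : eqType) (P : pred T) (g : T -> nat) l :
  sumn (map g l) <= sumn (map (fun t => if P t then (g t).-1 else g t) l) + count P l.
Proof. elim: l => //= x l IH; case: (P x) => /=; lia. Qed.

Lemma step_contract G i s : wf G -> i < size (edges G) -> Inv G s -> Inv (contract G i) s.
Proof.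
move=> wG Hi [l [U Hent Hdis Hcov Hcnt]].
have [ha hb Nab] := ab_props wG Hi.
pose dd (t : nat * nat * nat) := if connb G (tu t) (ca G i) then (td t).-1 else td t.
apply: (@transfer G (contract G i) s (fun w => w < nv G) (ren G i) dd l) => //.
- by move=> w; apply: ren_range.
- by move=> w2 /(ren_surj wG Hi).
- by move=> u v _ _; apply: conn_push.
- by move=> u v Hu Hv; apply: conn_pull.
- move=> t Ht; case: (Hent t Ht) => h1 h2 h3 h4 r P L.
  case: (lift1 wG Hi h1 h2 P L) => r0 [P0 L0 S0].
  have := h4 r0 P0 L0 => h; rewrite /dd.
  case: (connP G (tu t) (ca G i)) => C.
  + move: S0 h => /=; case: (_ \in _) => /=; lia.
  + have Nm : (ren G i (ca G i) \in ren G i (tu t) :: r) = false.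
      by apply/negP => /(hit_m wG Hi h1 P).
    by move: S0; rewrite Nm addn0; apply: leq_trans h.
- have C1 : count (fun t => connb G (tu t) (ca G i)) l <= 1.
    apply: count_le1 => // t t' Ht Ht' /connP C /connP C'.
    apply: NNPP => Ne; apply: (Hdis t t' Ht Ht' Ne); exact: conn_trans C (conn_sym C').
  have := sumn_dec (fun t => connb G (tu t) (ca G i)) snd l.
  rewrite -/dd nv2 => h.
  move: Hcnt h C1; move: (sumn (map snd l)) (sumn (map dd l)) (count _ l) (size l) (nv G) => a b c d n.
  lia.
Qed.

Lemma normp_eq (p q : nat * nat) : normp p = normp q -> p = q \/ p = (q.2, q.1).
Proof.
case: p q => [a b] [c d]; rewrite /normp /= => -[E1 E2].
case: (leqP a b) => h1; case: (leqP c d) => h2; move: E1 E2.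
- rewrite (minn_idPl h1) (maxn_idPr h1) (minn_idPl h2) (maxn_idPr h2) => -> ->; by left.
- rewrite (minn_idPl h1) (maxn_idPr h1) (minn_idPr (ltnW h2)) (maxn_idPl (ltnW h2)) => -> ->; by right.
- rewrite (minn_idPr (ltnW h1)) (maxn_idPl (ltnW h1)) (minn_idPl h2) (maxn_idPr h2) => -> ->; by right.
- rewrite (minn_idPr (ltnW h1)) (maxn_idPl (ltnW h1)) (minn_idPr (ltnW h2)) (maxn_idPl (ltnW h2)) => -> ->; by left.
Qed.

Lemma adj_mem G (e : nat * nat) : e \in edges G -> adj G e.1 e.2.
Proof.
move=> He; apply/adjPP; exists (index e (edges G)) => //.
by rewrite /joins index_mem He /= nth_index // !eqxx.
Qed.

Lemma adj_edge G a b : adj G a b -> exists2 e, e \in edges G & (e = (a, b) \/ e = (b, a)).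
Proof.
case/adjPP=> j _ /andP[Hj /= J]; exists (nth (0,0) (edges G) j); first exact: mem_nth.
move: J; case: (nth _ _ _) => e1 e2 /= /orP[]/andP[/eqP-> /eqP->]; auto.
Qed.

Section Iso.
Variables (G G' : mgraph) (f : nat -> nat).
Hypothesis wG : wf G.
Hypothesis Hnv : nv G = nv G'.
Hypothesis Hrng : forall w, w < nv G -> f w < nv G'.
Hypothesis Hinj : forall w w', w < nv G -> w' < nv G -> f w = f w' -> w = w'.
Hypothesis Hperm : perm_eq (map (fun e : nat * nat => normp (f e.1, f e.2)) (edges G)) (map normp (edges G')).

Lemma iso_push a b : adj G a b -> adj G' (f a) (f b).
Proof.
case/adj_edge => e He Ee.
have : normp (f e.1, f e.2) \in map normp (edges G').
  by rewrite -(perm_mem Hperm); apply/mapP; exists e.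
case/mapP => e' He' /esym/normp_eq Ee'.
have A := adj_mem He'.
case: Ee Ee' => -> /= [] E'; rewrite E' /= in A => //; by rewrite /adj adjP_sym.
Qed.

Lemma iso_pull a q : a < nv G -> adj G' (f a) q -> exists2 z, adj G a z & f z = q.
Proof.
move=> Ha /adj_edge[e' He' Ee'].
have : normp e' \in map (fun e : nat * nat => normp (f e.1, f e.2)) (edges G).
  by rewrite (perm_mem Hperm); apply: map_f.
case/mapP => e He /normp_eq Ee.
have A := adj_mem He; have [h1 h2 _] := adjP_wf wG A.
case: Ee' Ee => -> /= [] [E1 E2].
- exists e.2; last by rewrite E2.
  by rewrite -(Hinj h1 Ha (esym E1)).
- exists e.1; last by rewrite E2.
  by rewrite /adj adjP_sym -(Hinj h2 Ha (esym E1)).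
- exists e.1; last by rewrite E1.
  by rewrite /adj adjP_sym -(Hinj h2 Ha (esym E2)).
- exists e.2; last by rewrite E1.
  by rewrite -(Hinj h1 Ha (esym E2)).
Qed.

Lemma iso_walk_pull u r : u < nv G -> path (adj G') (f u) r ->
  exists r0, [/\ path (adj G) u r0, map f r0 = r & last u r0 < nv G].
Proof.
elim: r u => [|q r IH] u Hu /=; first by exists [::].
case/andP=> A P; case: (iso_pull Hu A) => z Az Ez.
have [_ hz _] := adjP_wf wG Az.
rewrite -Ez in P; case: (IH z hz P) => r0 [P0 M0 L0].
by exists (z :: r0); rewrite /= Az P0 M0 Ez.
Qed.

Lemma iso_conn_pull u v : u < nv G -> v < nv G -> conn G' (f u) (f v) -> conn G u v.
Proof.
move=> Hu Hv [r [P L]]; case: (iso_walk_pull Hu P) => r0 [P0 M0 L0].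
exists r0; split => //; apply: Hinj => //; by rewrite -L -M0 last_map.
Qed.

End Iso.

Lemma step_iso G G' s : wf G -> iso G G' -> Inv G s -> Inv G' s.
Proof.
move=> wG [Hnv [f [Hrng Hinj Hperm]]] [l [U Hent Hdis Hcov Hcnt]].
apply: (@transfer G G' s (fun w => w < nv G) f snd l) => //.
- move=> w2 Hw2.
  have Uf : uniq (map f (iota 0 (nv G))).
    rewrite map_inj_in_uniq ?iota_uniq // => a b; rewrite !mem_iota /= => ha hb; exact: Hinj.
  have Sub : {subset map f (iota 0 (nv G)) <= iota 0 (nv G')}.
    move=> y /mapP[w]; rewrite !mem_iota /= => hw ->; exact: Hrng.
  have [_ Eq] := uniq_min_size Uf Sub (ltac:(by rewrite size_map !size_iota Hnv)).
  have : w2 \in iota 0 (nv G') by rewrite mem_iota.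
  rewrite -Eq => /mapP[w]; rewrite mem_iota /= => hw ->; by exists w.
- move=> u v _ _ [r [P L]]; exists (map f r); split.
  + apply: path_map_rel P => a b; exact: iso_push.
  + by rewrite last_map L.
- by move=> u v Hu Hv; apply: iso_conn_pull.
- move=> t Ht; case: (Hent t Ht) => h1 h2 h3 h4 r P L.
  case: (iso_walk_pull wG Hinj Hperm h1 P) => r0 [P0 M0 L0].
  rewrite -M0 size_map; apply: h4 => //; apply: Hinj => //; by rewrite -L -M0 last_map.
- by rewrite -Hnv.
Qed.

Lemma ob_wf H G : obtainable H G -> wf G.
Proof. by case. Qed.

Lemma step_inv s G1 G2 : minor_step G1 G2 -> wf G1 -> wf G2 -> Inv G1 s -> Inv G2 s.
Proof.
case=> [G x I|G i Hi|G i [Hi _]|G G' Iso] w1 w2.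
- exact: step_delv.
- exact: step_dele.
- exact: step_contract.
- exact: step_iso.
Qed.

Lemma ob_inv H G s : obtainable H G -> Inv H s -> Inv G s.
Proof.
elim=> // G1 G2 Ob IH St w2 I.
exact: (step_inv St (ob_wf Ob) w2 (IH I)).
Qed.

Theorem theorem4p2 (T : mgraph) (D : nat) :
  is_tree T -> diam_is T D -> sp_floor_is T (nv T - D - 1).
Proof.
move=> Ht Hd; split; first exact: upper.
move=> H s' wH Hm Hs.
apply: Inv_final Ht Hd _.
exact: ob_inv Hm (Inv_init wH Hs).
Qed.
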